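(* Let $0\to R\to F\xrightarrow{\pi} L\to 0$ be a free presentation of a Lie superalgebra $L$ (so $F$ is a free Lie superalgebra and $R$ a graded ideal), and let $\bar\pi:F/[R,F]\to L$ be the induced epimorphism. Then $Z^{*}(L)=\bar\pi\big(Z(F/[R,F])\big)$.
   Context: All algebras are over a field $\mathbb{F}$ of characteristic $\neq 2,3$. A Lie superalgebra $L$ is capable if $L\cong H/Z(H)$ for some Lie superalgebra $H$. The epicenter $Z^{*}(L)$ is the smallest graded ideal $I$ of $L$ such that $L/I$ is capable. *)

(* Defs.v *)
From HB Require Import structures.
From mathcomp Require Import all_boot all_order all_algebra.
Set Implicit Arguments. Unset Strict Implicit. Unset Printing Implicit Defensive.
Import GRing.Theory.
Local Open Scope ring_scope.

(* sign (-1)^{p q} for parities p q (true = odd) *)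
Definition psign (K : fieldType) (p q : bool) : K := if p && q then -1 else 1.

Definition homog (V : Type) (ev od : V -> Prop) (p : bool) (x : V) : Prop :=
  if p then od x else ev x.

HB.mixin Record isLieSuper (K : fieldType) V of GRing.Lmodule K V := {
  lbr : V -> V -> V;
  sev : V -> Prop;
  sod : V -> Prop;
  sev0 : sev 0;
  sevD : forall x y, sev x -> sev y -> sev (x + y);
  sevZ : forall (a : K) x, sev x -> sev (a *: x);
  sod0 : sod 0;
  sodD : forall x y, sod x -> sod y -> sod (x + y);
  sodZ : forall (a : K) x, sod x -> sod (a *: x);
  sdecomp : forall x, exists a b, sev a /\ sod b /\ x = a + b;
  sdirect : forall x, sev x -> sod x -> x = 0;
  lbr_linl : forall (a : K) x y z, lbr (a *: x + y) z = a *: lbr x z + lbr y z;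
  lbr_linr : forall (a : K) x y z, lbr z (a *: x + y) = a *: lbr z x + lbr z y;
  lbr_graded : forall (p q : bool) x y,
    homog sev sod p x -> homog sev sod q y -> homog sev sod (addb p q) (lbr x y);
  lbr_santi : forall (p q : bool) x y,
    homog sev sod p x -> homog sev sod q y ->
    lbr x y = - (psign K p q *: lbr y x);
  lbr_sjacobi : forall (p q r : bool) x y z,
    homog sev sod p x -> homog sev sod q y -> homog sev sod r z ->
    psign K p r *: lbr x (lbr y z) + psign K q p *: lbr y (lbr z x)
      + psign K r q *: lbr z (lbr x y) = 0
}.

#[short(type="lieSuperType")]
HB.structure Definition LieSuper (K : fieldType) :=
  { V of isLieSuper K V & GRing.Lmodule K V }.

Section Defs.
Variable K : fieldType.

Definition is_lshom (L M : lieSuperType K) (f : L -> M) : Prop :=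
  (forall (a : K) x y, f (a *: x + y) = a *: f x + f y) /\
  (forall x, sev x -> sev (f x)) /\ (forall x, sod x -> sod (f x)) /\
  (forall x y, f (lbr x y) = lbr (f x) (f y)).

Definition surj (A B : Type) (f : A -> B) : Prop := forall b, exists a, f a = b.

Definition lcenter (H : lieSuperType K) (x : H) : Prop := forall y : H, lbr x y = 0.

Definition graded_ideal (L : lieSuperType K) (I : L -> Prop) : Prop :=
  I 0 /\ (forall x y, I x -> I y -> I (x + y)) /\
  (forall (a : K) x, I x -> I (a *: x)) /\
  (forall x, I x -> exists a b, sev a /\ sod b /\ I a /\ I b /\ x = a + b) /\
  (forall x y, I x -> I (lbr x y) /\ I (lbr y x)).

(* L is capable: L ≅ H / Z(H), i.e. there is a surjective homomorphism
   H -> L whose kernel is Z(H) *)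
Definition capable (L : lieSuperType K) : Prop :=
  exists (H : lieSuperType K) (f : H -> L),
    is_lshom f /\ surj f /\ (forall h, f h = 0 <-> lcenter h).

(* L / I is capable: some (hence every) quotient Q ≅ L/I is capable *)
Definition quot_capable (L : lieSuperType K) (I : L -> Prop) : Prop :=
  exists (Q : lieSuperType K) (p : L -> Q),
    is_lshom p /\ surj p /\ (forall x, p x = 0 <-> I x) /\ capable Q.

Definition is_epicenter (L : lieSuperType K) (I : L -> Prop) : Prop :=
  graded_ideal I /\ quot_capable I /\
  (forall J : L -> Prop, graded_ideal J -> quot_capable J ->
     forall x, I x -> J x).

Definition free_on (X : Type) (par : X -> bool) (F : lieSuperType K)
    (i : X -> F) : Prop :=
  (forall x, homog sev sod (par x) (i x)) /\
  forall (H : lieSuperType K) (g : X -> H),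
    (forall x, homog sev sod (par x) (g x)) ->
    exists phi : F -> H, is_lshom phi /\ (forall x, phi (i x) = g x) /\
      forall psi : F -> H, is_lshom psi -> (forall x, psi (i x) = g x) ->
        forall y, psi y = phi y.

Definition comm_sub (F : lieSuperType K) (R : F -> Prop) (x : F) : Prop :=
  exists s : seq (F * F), (forall pr, pr \in s -> R pr.1) /\
    x = \sum_(pr <- s) lbr pr.1 pr.2.

End Defs.

(* Main.v *)
Require Import Defs.
From HB Require Import structures.
From mathcomp Require Import all_boot all_order all_algebra.
From mathcomp Require Import boolp.
Set Implicit Arguments. Unset Strict Implicit. Unset Printing Implicit Defensive.
Import GRing.Theory.
Local Open Scope ring_scope.

Section LieFacts.
Variables (K : fieldType) (L : lieSuperType K).
Implicit Types x y z c d : L.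

Lemma lbr0l z : lbr 0 z = 0 :> L.
Proof.
have := lbr_linl 1 (0:L) 0 z; rewrite !scale1r addr0 => /(congr1 (fun t => t - lbr (0:L) z)).
by rewrite subrr addrK => /esym.
Qed.
Lemma lbr0r z : lbr z 0 = 0 :> L.
Proof.
have := lbr_linr 1 (0:L) 0 z; rewrite !scale1r addr0 => /(congr1 (fun t => t - lbr z (0:L))).
by rewrite subrr addrK => /esym.
Qed.
Lemma lbrDl x y z : lbr (x + y) z = lbr x z + lbr y z.
Proof. by have := lbr_linl 1 x y z; rewrite !scale1r. Qed.
Lemma lbrDr x y z : lbr z (x + y) = lbr z x + lbr z y.
Proof. by have := lbr_linr 1 x y z; rewrite !scale1r. Qed.
Lemma lbrZl a x z : lbr (a *: x) z = a *: lbr x z.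
Proof. by have := lbr_linl a x 0 z; rewrite !addr0 lbr0l addr0. Qed.
Lemma lbrZr a x z : lbr z (a *: x) = a *: lbr z x.
Proof. by have := lbr_linr a x 0 z; rewrite !addr0 lbr0r addr0. Qed.
Lemma lbrNl x z : lbr (- x) z = - lbr x z.
Proof. by rewrite -scaleN1r lbrZl scaleN1r. Qed.
Lemma lbrNr x z : lbr z (- x) = - lbr z x.
Proof. by rewrite -scaleN1r lbrZr scaleN1r. Qed.
Lemma lbrBl x y z : lbr (x - y) z = lbr x z - lbr y z.
Proof. by rewrite lbrDl lbrNl. Qed.
Lemma lbrBr x y z : lbr z (x - y) = lbr z x - lbr z y.
Proof. by rewrite lbrDr lbrNr. Qed.

Lemma sevN x : sev x -> sev (- x). Proof. by move=> h; rewrite -scaleN1r; apply: sevZ. Qed.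
Lemma sodN x : sod x -> sod (- x). Proof. by move=> h; rewrite -scaleN1r; apply: sodZ. Qed.
Lemma homogN p x : homog sev sod p x -> homog sev sod p (- x).
Proof. by case: p => /=; [apply: sodN | apply: sevN]. Qed.
Lemma homogD p x y : homog sev sod p x -> homog sev sod p y -> homog sev sod p (x + y).
Proof. by case: p => /=; [apply: sodD | apply: sevD]. Qed.

Lemma hom_split x y : sev x -> sod y -> x + y = 0 -> x = 0 /\ y = 0.
Proof.
move=> hx hy e; have ex : x = - y by apply/eqP; rewrite -subr_eq0 opprK e.
have x0 : x = 0 by apply: sdirect => //; rewrite ex; apply: sodN.
by split => //; move: e; rewrite x0 add0r.
Qed.

Lemma central_comp c (c0 c1 : L) : lcenter c -> sev c0 -> sod c1 -> c = c0 + c1 ->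
  lcenter c0 /\ lcenter c1.
Proof.
move=> hc h0 h1 ec.
have H : forall p y, homog sev sod p y -> lbr c0 y = 0 /\ lbr c1 y = 0.
  move=> p y hy; have e : lbr c0 y + lbr c1 y = 0 by rewrite -lbrDl -ec hc.
  have g0 := lbr_graded false p _ _ h0 hy; have g1 := lbr_graded true p _ _ h1 hy.
  case: p hy g0 g1 => hy /= g0 g1.
    by rewrite addrC in e; have [] := hom_split g1 g0 e.
  by have [] := hom_split g0 g1 e.
split=> y; have [a [b [ha [hb ->]]]] := sdecomp y; rewrite lbrDr.
  by rewrite (H false a ha).1 (H true b hb).1 addr0.
by rewrite (H false a ha).2 (H true b hb).2 addr0.
Qed.

Lemma lcenter_r c : lcenter c -> forall y, lbr y c = 0.
Proof.
move=> hc y; have [c0 [c1 [h0 [h1 ec]]]] := sdecomp c.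
have [z0 z1] := central_comp hc h0 h1 ec.
have [a [b [ha [hb ->]]]] := sdecomp y.
rewrite ec !lbrDl !lbrDr.
rewrite (lbr_santi false false _ _ ha h0) (lbr_santi false true _ _ ha h1).
rewrite (lbr_santi true false _ _ hb h0) (lbr_santi true true _ _ hb h1).
by rewrite /lcenter in z0 z1; rewrite !z0 !z1 !scaler0 !oppr0 !addr0.
Qed.

Lemma lcenterD c d : lcenter c -> lcenter d -> lcenter (c + d).
Proof. by move=> hc hd y; rewrite lbrDl hc hd addr0. Qed.
Lemma lcenterZ a c : lcenter c -> lcenter (a *: c).
Proof. by move=> hc y; rewrite lbrZl hc scaler0. Qed.
Lemma lcenter0 : lcenter (0 : L).
Proof. by move=> y; rewrite lbr0l. Qed.
End LieFacts.

Section Ideal.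
Variables (K : fieldType) (L : lieSuperType K) (I : L -> Prop) (hI : graded_ideal I).
Lemma I0 : I 0. Proof. by case: hI => h _. Qed.
Lemma ID x y : I x -> I y -> I (x + y). Proof. by case: hI => _ [h _]; apply: h. Qed.
Lemma IZ a x : I x -> I (a *: x). Proof. by case: hI => _ [_ [h _]]; apply: h. Qed.
Lemma IN x : I x -> I (- x). Proof. by move=> h; rewrite -scaleN1r; apply: IZ. Qed.
Lemma IB x y : I x -> I y -> I (x - y). Proof. by move=> hx hy; apply: ID => //; apply: IN. Qed.
Lemma Idec x : I x -> exists a b, sev a /\ sod b /\ I a /\ I b /\ x = a + b.
Proof. by case: hI => _ [_ [_ [h _]]]; apply: h. Qed.
Lemma Ibr x y : I x -> I (lbr x y) /\ I (lbr y x).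
Proof. by case: hI => _ [_ [_ [_ h]]]; apply: h. Qed.

Lemma Iev x y : sev x -> sod y -> I (x - y) -> I x.
Proof.
move=> hx hy /Idec [a [b [ha [hb [Ia [Ib e]]]]]].
have e2 : (x - a) + (- (y + b)) = 0.
  by rewrite opprD addrACA -opprD -e subrr.
have [e3 _] := hom_split (sevD _ _ hx (sevN ha)) (sodN (sodD _ _ hy hb)) e2.
by move/eqP: e3; rewrite subr_eq0 => /eqP ->.
Qed.
Lemma Iod x y : sod x -> sev y -> I (x - y) -> I x.
Proof.
move=> hx hy /Idec [a [b [ha [hb [Ia [Ib e]]]]]].
have e2 : (- (y + a)) + (x - b) = 0.
  by rewrite opprD addrACA addrC -opprD addrC (addrC (- y)) -e subrr.
have [_ e3] := hom_split (sevN (sevD _ _ hy ha)) (sodD _ _ hx (sodN hb)) e2.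
by move/eqP: e3; rewrite subr_eq0 => /eqP ->.
Qed.
End Ideal.

Record qrec (K : fieldType) (L : lieSuperType K) (I : L -> Prop) := QRec {
  qset : L -> Prop; qsetP : exists x, qset = (fun y => I (y - x)) }.

Definition quotT (K : fieldType) (L : lieSuperType K) (I : L -> Prop)
  (hI : graded_ideal I) : Type := qrec I.

HB.instance Definition _ (K : fieldType) (L : lieSuperType K) (I : L -> Prop) (hI : graded_ideal I) := gen_eqMixin (@quotT K L I hI).
HB.instance Definition _ (K : fieldType) (L : lieSuperType K) (I : L -> Prop) (hI : graded_ideal I) := gen_choiceMixin (@quotT K L I hI).

Section Quot.
Variables (K : fieldType) (L : lieSuperType K) (I : L -> Prop) (hI : graded_ideal I).
Local Notation Q := (quotT hI).
Implicit Types x y z : L.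
Implicit Types c d e : Q.

Definition cls x : Q := @QRec K L I (fun y => I (y - x)) (ex_intro _ x erefl).
Definition rep c : L := projT1 (cid (qsetP c)).

Lemma quot_eq c d : qset c = qset d -> c = d.
Proof.
case: c => s1 p1; case: d => s2 p2 /= e; subst s2.
by rewrite (Prop_irrelevance p1 p2).
Qed.

Lemma cls_eq x y : I (x - y) -> cls x = cls y.
Proof.
move=> h; apply: quot_eq => /=; apply: funext => z; apply: propext; split=> h2.
  have -> : z - y = (z - x) + (x - y) by rewrite addrA subrK.
  exact: (ID hI).
have -> : z - x = (z - y) - (x - y) by rewrite opprB addrA subrK.
exact: (IB hI).
Qed.

Lemma cls_eqP x y : cls x = cls y -> I (x - y).
Proof.
move=> /(congr1 (@qset _ _ _)) /= /(congr1 (fun f => f x)) <-.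
by rewrite subrr; apply: (I0 hI).
Qed.

Lemma repK c : cls (rep c) = c.
Proof. by apply: quot_eq; rewrite /rep; case: cid => x /= ->. Qed.

Lemma quot_ind (P : Q -> Prop) : (forall x, P (cls x)) -> forall c, P c.
Proof. by move=> H c; rewrite -(repK c). Qed.

Lemma rep_cls x : I (rep (cls x) - x).
Proof. by apply: cls_eqP; rewrite repK. Qed.

Definition qzero : Q := cls 0.
Definition qadd c d : Q := cls (rep c + rep d).
Definition qopp c : Q := cls (- rep c).
Definition qscale (a : K) c : Q := cls (a *: rep c).
Definition qlbr c d : Q := cls (lbr (rep c) (rep d)).
Definition qsev c : Prop := exists x, sev x /\ c = cls x.
Definition qsod c : Prop := exists x, sod x /\ c = cls x.

Lemma qaddE x y : qadd (cls x) (cls y) = cls (x + y).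
Proof.
apply: cls_eq; rewrite opprD addrACA; apply: (ID hI); exact: rep_cls.
Qed.
Lemma qoppE x : qopp (cls x) = cls (- x).
Proof. by apply: cls_eq; rewrite -opprD; apply: (IN hI); apply: rep_cls. Qed.
Lemma qscaleE a x : qscale a (cls x) = cls (a *: x).
Proof. by apply: cls_eq; rewrite -scalerBr; apply: (IZ hI); apply: rep_cls. Qed.
Lemma qlbrE x y : qlbr (cls x) (cls y) = cls (lbr x y).
Proof.
apply: cls_eq.
have -> : lbr (rep (cls x)) (rep (cls y)) - lbr x y =
   lbr (rep (cls x) - x) (rep (cls y)) + lbr x (rep (cls y) - y).
  by rewrite lbrBl lbrBr addrA subrK.
apply: (ID hI); [apply: (Ibr hI _ (rep_cls x)).1 | apply: (Ibr hI _ (rep_cls y)).2].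
Qed.

Lemma qaddA : associative qadd.
Proof.
move=> c d e; elim/quot_ind: c => x; elim/quot_ind: d => y; elim/quot_ind: e => z.
by rewrite !qaddE addrA.
Qed.
Lemma qaddC : commutative qadd.
Proof. by move=> c d; elim/quot_ind: c => x; elim/quot_ind: d => y; rewrite !qaddE addrC. Qed.
Lemma qadd0 : left_id qzero qadd.
Proof. by move=> c; elim/quot_ind: c => x; rewrite /qzero qaddE add0r. Qed.
Lemma qaddN : left_inverse qzero qopp qadd.
Proof. by move=> c; elim/quot_ind: c => x; rewrite qoppE qaddE addNr. Qed.

End Quot.

HB.instance Definition _ (K : fieldType) (L : lieSuperType K) (I : L -> Prop) (hI : graded_ideal I) :=
  GRing.isZmodule.Build (@quotT K L I hI) (@qaddA K L I hI) (@qaddC K L I hI)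
    (@qadd0 K L I hI) (@qaddN K L I hI).

Section Quot2.
Variables (K : fieldType) (L : lieSuperType K) (I : L -> Prop) (hI : graded_ideal I).
Local Notation Q := (quotT hI).
Implicit Types x y z : L.
Local Notation cls := (@cls K L I hI).

Lemma addE x y : cls x + cls y = cls (x + y). Proof. exact: qaddE. Qed.
Lemma oppE x : - cls x = cls (- x). Proof. exact: qoppE. Qed.
Lemma zeroE : 0 = cls 0 :> Q. Proof. by []. Qed.

Lemma qscaleA a b (c : Q) : qscale a (qscale b c) = qscale (a * b) c.
Proof. by elim/quot_ind: c => x; rewrite !qscaleE scalerA. Qed.
Lemma qscale1 (c : Q) : qscale 1 c = c.
Proof. by elim/quot_ind: c => x; rewrite qscaleE scale1r. Qed.
Lemma qscaleDr a : {morph @qscale K L I hI a : u v / u + v}.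
Proof.
move=> c d; elim/quot_ind: c => x; elim/quot_ind: d => y.
by rewrite addE !qscaleE addE scalerDr.
Qed.
Lemma qscaleDl (c : Q) : {morph (@qscale K L I hI)^~ c : a b / a + b}.
Proof. by move=> a b; elim/quot_ind: c => x; rewrite !qscaleE addE scalerDl. Qed.
End Quot2.

HB.instance Definition _ (K : fieldType) (L : lieSuperType K) (I : L -> Prop) (hI : graded_ideal I) :=
  GRing.Zmodule_isLmodule.Build K (@quotT K L I hI) (@qscaleA K L I hI)
    (@qscale1 K L I hI) (@qscaleDr K L I hI) (@qscaleDl K L I hI).

Section Quot3.
Variables (K : fieldType) (L : lieSuperType K) (I : L -> Prop) (hI : graded_ideal I).
Local Notation Q := (quotT hI).
Local Notation qsev := (@qsev K L I hI).
Local Notation qsod := (@qsod K L I hI).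
Local Notation qlbr := (@qlbr K L I hI).
Implicit Types x y z : L.
Local Notation cls := (@cls K L I hI).

Lemma scaleE a x : a *: cls x = cls (a *: x). Proof. exact: qscaleE. Qed.
Lemma brE x y : qlbr (cls x) (cls y) = cls (lbr x y). Proof. exact: qlbrE. Qed.

Lemma homogQ p (c : Q) : homog qsev qsod p c ->
  exists x : L, homog sev sod p x /\ c = cls x.
Proof. by case: p. Qed.
Lemma homogQ' p x : homog sev sod p x -> homog qsev qsod p (cls x).
Proof. by case: p => h; exists x. Qed.

Lemma qsev0 : qsev (0 : Q). Proof. by exists 0; split => //; apply: sev0. Qed.
Lemma qsod0 : qsod (0 : Q). Proof. by exists 0; split => //; apply: sod0. Qed.
Lemma qsevD (c d : Q) : qsev c -> qsev d -> qsev (c + d).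
Proof. by move=> [x [hx ->]] [y [hy ->]]; exists (x + y); rewrite addE; split => //; apply: sevD. Qed.
Lemma qsodD (c d : Q) : qsod c -> qsod d -> qsod (c + d).
Proof. by move=> [x [hx ->]] [y [hy ->]]; exists (x + y); rewrite addE; split => //; apply: sodD. Qed.
Lemma qsevZ a (c : Q) : qsev c -> qsev (a *: c).
Proof. by move=> [x [hx ->]]; exists (a *: x); rewrite scaleE; split => //; apply: sevZ. Qed.
Lemma qsodZ a (c : Q) : qsod c -> qsod (a *: c).
Proof. by move=> [x [hx ->]]; exists (a *: x); rewrite scaleE; split => //; apply: sodZ. Qed.
Lemma qdecomp (c : Q) : exists a b, qsev a /\ qsod b /\ c = a + b.
Proof.
elim/quot_ind: c => x; have [a [b [ha [hb ->]]]] := sdecomp x.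
by exists (cls a), (cls b); rewrite addE; split; [exists a | split; [exists b|]].
Qed.
Lemma qdirect (c : Q) : qsev c -> qsod c -> c = 0.
Proof.
move=> [x [hx ->]] [y [hy e]]; rewrite zeroE; apply: cls_eq; rewrite subr0.
by apply: (Iev hI hx hy); apply: cls_eqP.
Qed.
Lemma qlinl a (c d e : Q) : qlbr (a *: c + d) e = a *: qlbr c e + qlbr d e.
Proof.
elim/quot_ind: c => x; elim/quot_ind: d => y; elim/quot_ind: e => z.
by rewrite scaleE addE !brE scaleE addE lbr_linl.
Qed.
Lemma qlinr a (c d e : Q) : qlbr e (a *: c + d) = a *: qlbr e c + qlbr e d.
Proof.
elim/quot_ind: c => x; elim/quot_ind: d => y; elim/quot_ind: e => z.
by rewrite scaleE addE !brE scaleE addE lbr_linr.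
Qed.
Lemma qgraded p q (c d : Q) : homog qsev qsod p c -> homog qsev qsod q d ->
  homog qsev qsod (addb p q) (qlbr c d).
Proof.
move=> /homogQ [x [hx ->]] /homogQ [y [hy ->]]; rewrite brE.
by apply: homogQ'; apply: lbr_graded.
Qed.
Lemma qsanti p q (c d : Q) : homog qsev qsod p c -> homog qsev qsod q d ->
  qlbr c d = - (psign K p q *: qlbr d c).
Proof.
move=> /homogQ [x [hx ->]] /homogQ [y [hy ->]]; rewrite !brE scaleE oppE.
by rewrite (lbr_santi p q _ _ hx hy).
Qed.
Lemma qjacobi p q r (c d e : Q) : homog qsev qsod p c -> homog qsev qsod q d ->
  homog qsev qsod r e ->
  psign K p r *: qlbr c (qlbr d e) + psign K q p *: qlbr d (qlbr e c)
      + psign K r q *: qlbr e (qlbr c d) = 0.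
Proof.
move=> /homogQ [x [hx ->]] /homogQ [y [hy ->]] /homogQ [z [hz ->]].
rewrite !brE !scaleE (addE hI (psign K p r *: _)) addE.
by rewrite (lbr_sjacobi p q r _ _ _ hx hy hz).
Qed.
End Quot3.

HB.instance Definition _ (K : fieldType) (L : lieSuperType K) (I : L -> Prop) (hI : graded_ideal I) :=
  isLieSuper.Build K (@quotT K L I hI) (@qsev0 K L I hI) (@qsevD K L I hI)
   (@qsevZ K L I hI) (@qsod0 K L I hI) (@qsodD K L I hI) (@qsodZ K L I hI)
   (@qdecomp K L I hI) (@qdirect K L I hI) (@qlinl K L I hI) (@qlinr K L I hI)
   (@qgraded K L I hI) (@qsanti K L I hI) (@qjacobi K L I hI).

Section Quot4.
Variables (K : fieldType) (L : lieSuperType K) (I : L -> Prop) (hI : graded_ideal I).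
Local Notation Q := (quotT hI).

Lemma cls_hom : is_lshom (@cls K L I hI).
Proof.
split; first by move=> a x y; rewrite scaleE addE.
split; first by move=> x hx; exists x.
split; first by move=> x hx; exists x.
by move=> x y; exact: (esym (brE hI x y)).
Qed.
Lemma cls_surj : surj (@cls K L I hI).
Proof. by move=> c; exists (rep c); rewrite repK. Qed.
Lemma cls_ker x : @cls K L I hI x = 0 <-> I x.
Proof.
split; first by rewrite zeroE => /cls_eqP; rewrite subr0.
by move=> h; rewrite zeroE; apply: cls_eq; rewrite subr0.
Qed.
Lemma quot_capable_of : capable (quotT hI) -> quot_capable I.
Proof. by move=> hc; exists (quotT hI), (@cls K L I hI); split; [apply: cls_hom|split; [apply: cls_surj|split; [apply: cls_ker|]]]. Qed.
End Quot4.

Section Hom.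
Variables (K : fieldType) (A B : lieSuperType K) (f : A -> B) (hf : is_lshom f).
Implicit Types x y : A.
Lemma homD x y : f (x + y) = f x + f y.
Proof. by have := hf.1 1 x y; rewrite !scale1r. Qed.
Lemma hom0 : f 0 = 0.
Proof.
have := homD 0 0; rewrite addr0 => /(congr1 (fun t => t - f 0)).
by rewrite subrr addrK => /esym.
Qed.
Lemma homZ a x : f (a *: x) = a *: f x.
Proof. by have := hf.1 a x 0; rewrite !addr0 hom0 addr0. Qed.
Lemma homN x : f (- x) = - f x.
Proof. by rewrite -scaleN1r homZ scaleN1r. Qed.
Lemma homB x y : f (x - y) = f x - f y.
Proof. by rewrite homD homN. Qed.
Lemma hom_br x y : f (lbr x y) = lbr (f x) (f y).
Proof. exact: hf.2.2.2. Qed.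
Lemma hom_homog p x : homog sev sod p x -> homog sev sod p (f x).
Proof. by case: p; [apply: hf.2.2.1 | apply: hf.2.1]. Qed.
Lemma hom_sum (T : Type) (s : seq T) (G : T -> A) :
  f (\sum_(t <- s) G t) = \sum_(t <- s) f (G t).
Proof.
elim: s => [|t s IH]; first by rewrite !big_nil hom0.
by rewrite !big_cons homD IH.
Qed.
Lemma lift_homog (hs : surj f) p (w : B) : homog sev sod p w ->
  exists x, homog sev sod p x /\ f x = w.
Proof.
have [u <-] := hs w; have [u0 [u1 [h0 [h1 ->]]]] := sdecomp u.
rewrite homD; case: p => /= hw.
  exists u1; split => //.
  have e : f u0 + (f u1 - (f u0 + f u1)) = 0 by rewrite addrA subrr.
  have [e1 _] := hom_split (hf.2.1 _ h0) (sodD _ _ (hf.2.2.1 _ h1) (sodN hw)) e.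
  by rewrite e1 add0r.
exists u0; split => //.
have e : (f u0 - (f u0 + f u1)) + f u1 = 0 by rewrite opprD addrA subrr add0r addNr.
have [_ e1] := hom_split (sevD _ _ (hf.2.1 _ h0) (sevN hw)) (hf.2.2.1 _ h1) e.
by rewrite e1 addr0.
Qed.
End Hom.

Lemma hom_comp (K : fieldType) (A B C : lieSuperType K) (f : A -> B) (g : B -> C) :
  is_lshom f -> is_lshom g -> is_lshom (fun x => g (f x)).
Proof.
move=> hf hg; split; first by move=> a x y; rewrite hf.1 hg.1.
split; first by move=> x hx; apply: hg.2.1; apply: hf.2.1.
split; first by move=> x hx; apply: hg.2.2.1; apply: hf.2.2.1.
by move=> x y; rewrite hf.2.2.2 hg.2.2.2.
Qed.

Unset Implicit Arguments.
Set Strict Implicit.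

Theorem mainTheorem12 (K : fieldType)
    (hK2 : (2%:R : K) != 0) (hK3 : (3%:R : K) != 0)
    (L F : lieSuperType K) (X : Type) (par : X -> bool) (i : X -> F)
    (hfree : free_on par i)
    (pi : F -> L) (hpi : is_lshom pi) (hpis : surj pi)
    (Q : lieSuperType K) (q : F -> Q) (hq : is_lshom q) (hqs : surj q)
    (hqker : forall x, q x = 0 <-> comm_sub (fun r => pi r = 0) x)
    (pibar : Q -> L) (hpibar : forall x, pibar (q x) = pi x) :
  is_epicenter (fun y : L => exists z : Q, lcenter z /\ y = pibar z).
Proof.
set Zs := (fun y : L => exists z : Q, lcenter z /\ y = pibar z).
have hpb : is_lshom pibar.
  split.
    move=> a u v; have [x <-] := hqs u; have [y <-] := hqs v.
    by rewrite -hq.1 !hpibar hpi.1.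
  split.
    move=> u hu; have [x [hx <-]] := lift_homog hq hqs (p:=false) hu.
    by rewrite hpibar; apply: hpi.2.1.
  split.
    move=> u hu; have [x [hx <-]] := lift_homog hq hqs (p:=true) hu.
    by rewrite hpibar; apply: hpi.2.2.1.
  move=> u v; have [x <-] := hqs u; have [y <-] := hqs v.
  by rewrite -(hom_br hq) !hpibar (hom_br hpi).
have hpbs : surj pibar by move=> b; have [x <-] := hpis b; exists (q x).
have kerc : forall u, pibar u = 0 -> lcenter u.
  move=> u; have [x <-] := hqs u; rewrite hpibar => hx w; have [y <-] := hqs w.
  rewrite -(hom_br hq); apply/hqker; exists [:: (x, y)]; split.
    by move=> pr; rewrite inE => /eqP ->.
  by rewrite big_seq1.
have hZ : graded_ideal Zs.
  split; first by exists 0; split; [exact: lcenter0 | rewrite (hom0 hpb)].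
  split.
    move=> _ _ [z1 [h1 ->]] [z2 [h2 ->]]; exists (z1 + z2).
    by split; [exact: lcenterD | rewrite (homD hpb)].
  split.
    move=> a _ [z [h ->]]; exists (a *: z).
    by split; [exact: lcenterZ | rewrite (homZ hpb)].
  split.
    move=> _ [z [h ->]]; have [z0 [z1 [h0 [h1 e]]]] := sdecomp z.
    have [c0 c1] := central_comp h h0 h1 e.
    exists (pibar z0), (pibar z1); split; first exact: hpb.2.1.
    split; first exact: hpb.2.2.1.
    split; first by exists z0.
    split; first by exists z1.
    by rewrite e (homD hpb).
  move=> _ y [z [h ->]]; have [w <-] := hpbs y; split.
    exists 0; split; first exact: lcenter0.
    by rewrite -(hom_br hpb) (h w) (hom0 hpb).
  exists 0; split; first exact: lcenter0.
  by rewrite -(hom_br hpb) (lcenter_r h w) (hom0 hpb).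
split; first exact: hZ.
split.
  apply: (@quot_capable_of _ _ _ hZ).
  exists Q, (fun z => @cls _ _ _ hZ (pibar z)).
  split; first exact: (hom_comp hpb (@cls_hom _ _ _ hZ)).
  split.
    move=> c; have [x <-] := @cls_surj _ _ _ hZ c; have [z <-] := hpbs x; by exists z.
  move=> h; split.
    move/(@cls_ker _ _ _ hZ _) => [z [hz e]].
    have : pibar (h - z) = 0 by rewrite (homB hpb) e subrr.
    move/kerc => hc.
    have -> : h = (h - z) + z by rewrite subrK.
    exact: lcenterD.
  by move=> hh; apply/(@cls_ker _ _ _ hZ _); exists h.
move=> J hJ [Q2 [p2 [hp2 [hp2s [hp2k [H [f [hf [hfs hfk]]]]]]]]] x [z [hz ->]].
apply/hp2k.
have lift : forall t, exists h : H, homog sev sod (par t) h /\ f h = p2 (pi (i t)).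
  move=> t; apply: (lift_homog hf hfs); apply: (hom_homog hp2); apply: (hom_homog hpi).
  exact: hfree.1 t.
pose g t := projT1 (cid (lift t)).
have hg t : homog sev sod (par t) (g t) /\ f (g t) = p2 (pi (i t)) := projT2 (cid (lift t)).
have [psi [hpsi [hpsig _]]] := hfree.2 H g (fun t => (hg t).1).
have [phi0 [_ [_ uniq]]] := hfree.2 Q2 (fun t => p2 (pi (i t)))
   (fun t => hom_homog hp2 (hom_homog hpi (hfree.1 t))).
have comm : forall y, f (psi y) = p2 (pi y).
  move=> y.
  have e1 := uniq (fun y => f (psi y)) (hom_comp hpsi hf).
  have e2 := uniq (fun y => p2 (pi y)) (hom_comp hpi hp2).
  rewrite e1; last by move=> t; rewrite /= hpsig (hg t).2.
  by rewrite e2.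
have cenR : forall r, pi r = 0 -> lcenter (psi r).
  by move=> r hr; apply/hfk; rewrite comm hr (hom0 hp2).
have [x0 ex] := hqs z; move: hz; rewrite -ex => hz.
rewrite hpibar -comm; apply/hfk => hh.
have [l el] := hp2s (f hh); have [y ey] := hpis l.
have : f (hh - psi y) = 0 by rewrite (homB hf) comm ey el subrr.
move/hfk => hc.
have -> : hh = psi y + (hh - psi y) by rewrite addrC subrK.
rewrite lbrDr (lcenter_r hc) addr0 -(hom_br hpsi).
have : comm_sub (fun r => pi r = 0) (lbr x0 y).
  by apply/hqker; rewrite (hom_br hq) (hz (q y)).
move=> [s [hs ->]]; rewrite (hom_sum hpsi); apply: big1_seq => pr /andP [_ prs].
by rewrite (hom_br hpsi) (cenR _ (hs pr prs) (psi pr.2)).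
Qed.
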